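(* For every finite tuple $(b_1,\dots,b_k)$ of elements of $\mathbb{S}$ there is $g\in\mathrm{Aut}(\mathbb{S})$ such that the set of columns meeting $\{b_1,\dots,b_k\}$ and the set of columns meeting $\{g(b_1),\dots,g(b_k)\}$ are disjoint.
   Context: Directed graphs are simple and loopless ($x\to y$ denotes a directed edge, at most one direction between two distinct vertices). $\mathcal{S}$ is the class of finite such graphs in which $x\perp y:\Leftrightarrow\neg(x\to y\vee y\to x)$ is an equivalence relation (its classes are called columns) and satisfying the parity condition: for $x_1\neq x_2$, $y_1\neq y_2$ with $x_1\perp x_2$, $y_1\perp y_2$, the number of directed edges from $\{x_1,x_2\}$ to $\{y_1,y_2\}$ is even. $\mathbb{S}$ (the semigeneric directed graph) is the Fraïssé limit of $\mathcal{S}$, i.e. the countable homogeneous directed graph whose finite induced substructures are exactly the members of $\mathcal{S}$ up to isomorphism. *)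

(* Defs.v *)
From mathcomp Require Import all_boot.
Set Implicit Arguments. Unset Strict Implicit. Unset Printing Implicit Defensive.

Definition perp (V : Type) (E : rel V) (x y : V) : bool := ~~ E x y && ~~ E y x.

(* Two vertices lie in the same column iff they are perp-related
   (columns are the classes of the equivalence relation perp). *)
Definition same_column (V : Type) (E : rel V) (x y : V) : bool := perp E x y.

(* A finite directed graph on 'I_n (every finite directed graph is isomorphic
   to one of these) belongs to the class S. *)
Definition in_S (n : nat) (e : rel 'I_n) : Prop :=
  (forall x, ~~ e x x) /\
  (forall x y, ~~ (e x y && e y x)) /\
  (* perp is an equivalence relation (reflexivity/symmetry are automatic) *)
  (forall x y z, perp e x y -> perp e y z -> perp e x z) /\
  (forall x1 x2 y1 y2, x1 != x2 -> y1 != y2 -> perp e x1 x2 -> perp e y1 y2 ->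
     ~~ odd (e x1 y1 + e x1 y2 + e x2 y1 + e x2 y2)).

Definition is_aut (V : Type) (E : rel V) (g : V -> V) : Prop :=
  bijective g /\ forall x y, E (g x) (g y) = E x y.

(* (V, E) is (a copy of) the semigeneric directed graph: the countable
   homogeneous directed graph whose age is exactly S (up to isomorphism). *)
Definition is_semigeneric (V : Type) (E : rel V) : Prop :=
  (exists c : V -> nat, injective c) /\
  (forall n (f : 'I_n -> V), injective f -> in_S (fun i j => E (f i) (f j))) /\
  (forall n (e : rel 'I_n), in_S e ->
     exists f : 'I_n -> V, injective f /\ forall i j, E (f i) (f j) = e i j) /\
  (forall n (f h : 'I_n -> V), injective f -> injective h ->
     (forall i j, E (f i) (f j) = E (h i) (h j)) ->
     exists g, is_aut E g /\ forall i, g (f i) = h i).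

(* Main.v *)
Require Import Defs.
From mathcomp Require Import all_boot.
From Stdlib Require Import Classical.
Set Implicit Arguments. Unset Strict Implicit. Unset Printing Implicit Defensive.

Lemma dedup_lemma (V : Type) k (b : nat -> V) :
  exists n (a : nat -> V), (forall i j, i < n -> j < n -> a i = a j -> i = j) /\
    forall i, i < k -> exists j, j < n /\ b i = a j.
Proof.
elim: k => [|k [n [a [Ha Hb]]]].
  by exists 0, b; split => // i j.
case: (classic (exists j, j < n /\ a j = b k)) => [[j [Hj Hab]]|Hno].
  exists n, a; split => // i; rewrite ltnS leq_eqVlt => /orP[/eqP->|Hi].
    by exists j.
  exact: Hb.
exists n.+1, (fun i => if i == n then b k else a i); split.
  move=> i j; rewrite ltnS (leq_eqVlt i) ltnS (leq_eqVlt j).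
  case: (i =P n) => [->|Hin]; case: (j =P n) => [->|Hjn] /=.
  - by [].
  - move=> _ Hj H; exfalso; apply: Hno; exists j; split => //; by rewrite H.
  - move=> Hi _ H; exfalso; apply: Hno; exists i; split => //; by rewrite H.
  - by move=> Hi Hj; apply: Ha.
move=> i; rewrite ltnS leq_eqVlt => /orP[/eqP->|Hi].
  by exists n; rewrite eqxx.
have [j [Hj ->]] := Hb i Hi; exists j; split; first by apply: ltnW.
by rewrite (ltn_eqF Hj).
Qed.

Section Constr.
Variables (V : Type) (E : rel V) (n : nat) (a : nat -> V).
Definition pp (x : 'I_(n+n)) : bool := x < n.
Definition rr (x : 'I_(n+n)) : nat := if x < n then val x else x - n.
Definition ee (x y : 'I_(n+n)) : bool :=
  if pp x == pp y then E (a (rr x)) (a (rr y)) else pp x && ~~ pp y.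

Lemma rr_lt x : rr x < n.
Proof.
rewrite /rr; case: ifP => // /negbT; rewrite -leqNgt => H.
by rewrite ltn_subLR // ltn_ord.
Qed.

Lemma rr_inj x y : pp x = pp y -> rr x = rr y -> x = y.
Proof.
rewrite /pp /rr => Hp; rewrite -Hp.
case Hx: (x < n) Hp => Hp Hr; apply: val_inj => //=.
move/negbT: Hx; rewrite -leqNgt => Hx.
have H : n <= y by rewrite leqNgt -Hp.
by rewrite -(subnK Hx) -(subnK H) Hr.
Qed.

Lemma perp_ee x y : perp ee x y -> pp x = pp y.
Proof.
rewrite /perp /ee; case: eqP => // _.
by case: (pp x); case: (pp y).
Qed.

Lemma perp_ee2 x y : pp x = pp y -> perp ee x y = perp E (a (rr x)) (a (rr y)).
Proof. by rewrite /perp /ee => ->; rewrite eqxx. Qed.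
End Constr.

Lemma A_props (V : Type) (E : rel V) n (a : nat -> V)
  (Ha : forall i j, i < n -> j < n -> a i = a j -> i = j)
  (HS : forall m (f : 'I_m -> V), injective f -> in_S (fun i j => E (f i) (f j))) :
  (forall x, x < n -> ~~ E (a x) (a x)) /\
  (forall x y, x < n -> y < n -> ~~ (E (a x) (a y) && E (a y) (a x))) /\
  (forall x y z, x < n -> y < n -> z < n ->
      perp E (a x) (a y) -> perp E (a y) (a z) -> perp E (a x) (a z)) /\
  (forall x1 x2 y1 y2, x1 < n -> x2 < n -> y1 < n -> y2 < n ->
     x1 != x2 -> y1 != y2 -> perp E (a x1) (a x2) -> perp E (a y1) (a y2) ->
     ~~ odd (E (a x1) (a y1) + E (a x1) (a y2) + E (a x2) (a y1) + E (a x2) (a y2))).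
Proof.
have inj : injective (fun i : 'I_n => a i).
  by move=> i j /(Ha _ _ (ltn_ord i) (ltn_ord j)) /val_inj.
have [H1 [H2 [H3 H4]]] := HS n _ inj.
split; [|split; [|split]].
- by move=> x Hx; apply: (H1 (Ordinal Hx)).
- by move=> x y Hx Hy; apply: (H2 (Ordinal Hx) (Ordinal Hy)).
- by move=> x y z Hx Hy Hz; apply: (H3 (Ordinal Hx) (Ordinal Hy) (Ordinal Hz)).
- move=> x1 x2 y1 y2 Hx1 Hx2 Hy1 Hy2 N1 N2.
  exact: (H4 (Ordinal Hx1) (Ordinal Hx2) (Ordinal Hy1) (Ordinal Hy2)).
Qed.

Lemma ee_in_S (V : Type) (E : rel V) n (a : nat -> V)
  (Ha : forall i j, i < n -> j < n -> a i = a j -> i = j)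
  (HS : forall m (f : 'I_m -> V), injective f -> in_S (fun i j => E (f i) (f j))) :
  in_S (ee E a (n:=n)).
Proof.
have [A1 [A2 [A3 A4]]] := A_props Ha HS.
split; [|split; [|split]].
- by move=> x; rewrite /ee eqxx; apply: A1; apply: rr_lt.
- move=> x y; rewrite /ee eq_sym; case: eqP => _.
    by apply: A2; apply: rr_lt.
  by case: (pp x); case: (pp y).
- move=> x y z Pxy Pyz.
  have e1 := perp_ee Pxy; have e2 := perp_ee Pyz.
  rewrite perp_ee2; last by rewrite e1.
  rewrite perp_ee2 // in Pxy; rewrite perp_ee2 // in Pyz.
  exact: (A3 _ _ _ (rr_lt _) (rr_lt _) (rr_lt _) Pxy Pyz).
- move=> x1 x2 y1 y2 N1 N2 P1 P2.
  have e1 := perp_ee P1; have e2 := perp_ee P2.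
  rewrite perp_ee2 // in P1; rewrite perp_ee2 // in P2.
  rewrite /ee -e1 -e2.
  case: (boolP (pp x1 == pp y1)) => [Heq|Hne].
    apply: A4 => //; try exact: rr_lt.
      by apply/eqP => H; move/eqP: N1; apply; apply: rr_inj.
    by apply/eqP => H; move/eqP: N2; apply; apply: rr_inj.
  by case: (pp x1) Hne; case: (pp y1).
Qed.

Lemma aut_comp (V : Type) (E : rel V) f g : is_aut E f -> is_aut E g -> is_aut E (f \o g).
Proof.
move=> [bf Hf] [bg Hg]; split; first exact: bij_comp.
by move=> x y /=; rewrite Hf Hg.
Qed.

Theorem mainTheorem9 (V : Type) (E : rel V) (HS : is_semigeneric E)
  (k : nat) (b : 'I_k -> V) :
  exists g : V -> V, is_aut E g /\
    forall i j : 'I_k, ~~ same_column E (b i) (g (b j)).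
Proof.
have [_ [HS2 [HS3 HS4]]] := HS.
case: k b => [|k] b.
  exists id; split; last by case.
  by split => //; exists id.
have [n [a [Ha Hb]]] := dedup_lemma k.+1 (fun i => b (inord i)).
have HeS := ee_in_S Ha HS2.
have [F [Finj HF]] := HS3 _ _ HeS.
pose af := fun i : 'I_n => a i.
have afinj : injective af.
  by move=> i j /(Ha _ _ (ltn_ord i) (ltn_ord j)) /val_inj.
pose L := fun i : 'I_n => F (lshift n i).
pose R := fun i : 'I_n => F (rshift n i).
have Linj : injective L by move=> i j /Finj /lshift_inj.
have Rinj : injective R by move=> i j /Finj /rshift_inj.
have ppL i : pp (lshift n i) = true by rewrite /pp /= ltn_ord.
have ppR i : pp (rshift n i) = false by rewrite /pp /= ltnNge leq_addr.
have rrL i : rr (lshift n i) = i by rewrite /rr /= ltn_ord.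
have rrR i : rr (rshift n i) = i by rewrite /rr /= ltnNge leq_addr /= addKn.
have HL i j : E (L i) (L j) = E (af i) (af j).
  by rewrite /L HF /ee !ppL eqxx !rrL.
have HR i j : E (L i) (L j) = E (R i) (R j).
  by rewrite /L /R !HF /ee !ppL !ppR eqxx !rrL !rrR.
have HLR i j : E (L i) (R j) = true.
  by rewrite /L /R HF /ee ppL ppR.
have [g0 [Ag0 Hg0]] := HS4 n af L afinj Linj (fun i j => esym (HL i j)).
have [k0 [Ak0 Hk0]] := HS4 n L af Linj afinj HL.
have [g1 [Ag1 Hg1]] := HS4 n L R Linj Rinj HR.
exists (k0 \o g1 \o g0); split.
  by apply: aut_comp => //; apply: aut_comp.
move=> i j.
have [u [Hu Eu]] := Hb (val i) (ltn_ord i).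
have [w [Hw Ew]] := Hb (val j) (ltn_ord j).
rewrite inord_val in Eu; rewrite inord_val in Ew.
rewrite Eu Ew /=.
have -> : a w = af (Ordinal Hw) by [].
have -> : a u = af (Ordinal Hu) by [].
rewrite Hg0 Hg1 -Hk0.
rewrite /same_column /perp.
case: Ak0 => _ Hk; rewrite !Hk HLR //.
Qed.
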